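(* Let $m > 1$ be an integer and $y \in \mathbb{R}^m$. Then there exists a subset $A \subset \{1,\dots,m\}$ such that $|y(i)| \le 2|y(j)|$ for all $i,j \in A$, and $\|y|_A\|_2 \ge \frac{1}{2.5\sqrt{\log m}}\|y\|_2$.
   Context: $y|_A$ denotes the restriction of $y$ to the coordinates in $A$. Here $\log$ denotes the binary logarithm. *)

(* Defs.v *)
From mathcomp Require Import all_boot all_order all_algebra.
From mathcomp Require Import all_classical all_reals all_analysis.
Import Order.TTheory GRing.Theory Num.Theory.
Local Open Scope ring_scope.

Definition log2 {R : realType} (x : R) : R := ln x / ln 2.

Definition l2norm_on {R : realType} {m : nat} (y : 'I_m -> R) (A : {set 'I_m}) : R :=
  Num.sqrt (\sum_(i in A) y i ^+ 2).

Definition l2norm {R : realType} {m : nat} (y : 'I_m -> R) : R :=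
  Num.sqrt (\sum_(i < m) y i ^+ 2).

(* Main.v *)
Require Import Defs.
From mathcomp Require Import all_boot all_order all_algebra.
From mathcomp Require Import all_classical all_reals all_analysis.
From mathcomp Require Import ring lra zify.
Import Order.TTheory GRing.Theory Num.Theory.
Local Open Scope ring_scope.

Theorem lemma3p7 (R : realType) (m : nat) (hm : (1 < m)%N) (y : 'I_m -> R) :
  exists A : {set 'I_m},
    (forall i j, i \in A -> j \in A -> `|y i| <= 2 * `|y j|) /\
    l2norm_on y A >= (1 / ((5 / 2) * Num.sqrt (log2 (m%:R : R)))) * l2norm y.
Proof.
rewrite /l2norm.
set N := \sum_(i < m) y i ^+ 2.
have N0 : 0 <= N by apply: sumr_ge0 => i _; exact: sqr_ge0.
set M := Num.sqrt N.
have M0 : 0 <= M by exact: sqrtr_ge0.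
have yM : forall i, `|y i| <= M.
  move=> i; rewrite /M -sqrtr_sqr ler_sqrt //.
  by rewrite /N (bigD1 i) //= lerDl sumr_ge0 // => j _; exact: sqr_ge0.
set p := trunc_log 2 m.
have p1 : (1 <= p)%N.
  have := trunc_log_ltn m (isT : (1 < 2)%N); rewrite -/p.
  case: (p) => //; rewrite expn1 => h; lia.
have h2p : (2 ^ p <= m)%N by apply: trunc_logP => //; lia.
have hmp : (m < 2 ^ p.+1)%N by apply: trunc_log_ltn.
set K := p.+1.
pose A (k : nat) := [set i : 'I_m | (M / 2 ^+ k.+1 < `|y i|) && (`|y i| <= M / 2 ^+ k)].
pose g (i : 'I_m) (n : nat) := if `|y i| <= M / 2 ^+ n then y i ^+ 2 else 0.
have key : forall i n, y i ^+ 2 <=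
    \sum_(k < n) (if i \in A k then y i ^+ 2 else 0) + g i n.
  move=> i; elim=> [|n IH].
    by rewrite big_ord0 add0r /g expr0 divr1 yM.
  rewrite big_ord_recr /= -addrA; apply: (le_trans IH); rewrite lerD2l /g.
  case: ifP => h; last first.
    by apply: addr_ge0; case: ifP => _ //; exact: sqr_ge0.
  case: (leP (`|y i|) (M / 2 ^+ n.+1)) => h2.
    by rewrite lerDr; case: ifP => _ //; exact: sqr_ge0.
  by rewrite inE h2 h /= addr0.
pose S (k : nat) := \sum_(i in A k) y i ^+ 2.
have S0 : forall k, 0 <= S k by move=> k; apply: sumr_ge0 => i _; exact: sqr_ge0.
have hsum : N <= \sum_(k < K) S k + \sum_(i < m) g i K.
  apply: le_trans (ler_sum _ (fun i _ => key i K)) _.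
  rewrite big_split /= lerD2r exchange_big /=.
  by apply: ler_sum => k _; rewrite /S [X in _ <= X]big_mkcond.
have hnat : (m * 2 <= 2 ^ (2 * K))%N.
  have : (2 ^ p.+2 <= 2 ^ (2 * K))%N by rewrite leq_exp2l // /K; lia.
  rewrite expnS; move: hmp; move: (2 ^ p.+1)%N (2 ^ (2 * K))%N => a b; lia.
have D0 : 0 < (2 : R) ^+ (2 * K) by rewrite exprn_gt0.
have hmD : (m%:R : R) * 2 <= 2 ^+ (2 * K).
  by have := hnat; rewrite -(ler_nat R) natrM natrX.
have htail : \sum_(i < m) g i K <= N / 2.
  apply: (@le_trans _ _ (\sum_(i < m) (M / 2 ^+ K) ^+ 2)).
    apply: ler_sum => i _; rewrite /g; case: ifP => h; last exact: sqr_ge0.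
    rewrite -real_normK ?num_real // ler_pXn2r // ?nnegrE //.
    exact: le_trans h.
  rewrite sumr_const card_ord.
  have -> : (M / 2 ^+ K) ^+ 2 = N / 2 ^+ (2 * K).
    by rewrite expr_div_n sqr_sqrtr // mulnC exprM.
  have -> : N / 2 ^+ (2 * K) *+ m = N * (m%:R / 2 ^+ (2 * K)).
    by rewrite -mulr_natr mulrC mulrA [_ * N]mulrC -mulrA.
  rewrite ler_wpM2l // ler_pdivrMr //; lra.
have Kpos : (0 : R) < K%:R by rewrite ltr0n.
have [k hk] : exists k : 'I_K, N / (2 * K%:R) <= S k.
  case: (boolP [exists k : 'I_K, N / (2 * K%:R) <= S k]) => [/existsP //|/existsPn h].
  have : \sum_(k < K) S k < \sum_(k < K) (N / (2 * K%:R)).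
    apply: ltr_sum; first by apply/hasP; exists ord0; rewrite ?mem_index_enum.
    by move=> k _; have := h k; rewrite -ltNge.
  rewrite sumr_const card_ord.
  have -> : N / (2 * K%:R) *+ K = N / 2 :> R.
    by rewrite -mulr_natr; field; rewrite pnatr_eq0.
  lra.
exists (A k); split.
  move=> i j; rewrite !inE => /andP [_ hi] /andP [hj _].
  have e : M / 2 ^+ k = 2 * (M / 2 ^+ k.+1).
    by rewrite exprS; field; rewrite expf_neq0.
  lra.
have Lp : (p%:R : R) <= log2 (m%:R : R).
  rewrite /log2 ler_pdivlMr ?ln_gt0 ?ltr1n //.
  rewrite mulr_natl -lnXn ?ltr0n // ler_ln ?posrE ?exprn_gt0 ?ltr0n //; try lia.
  by rewrite -natrX ler_nat.
have p1R : (1 : R) <= p%:R by rewrite ler1n.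
set L := log2 (m%:R : R).
have {}Lp : p%:R <= L := Lp.
have L0 : 0 < L by lra.
set c := 1 / (5 / 2 * Num.sqrt L).
have c0 : 0 <= c by rewrite /c divr_ge0 // mulr_ge0 // sqrtr_ge0.
have c2 : c ^+ 2 = 1 / (25 / 4 * L).
  rewrite /c expr_div_n expr1n exprMn sqr_sqrtr; last exact: ltW.
  by congr (_ / (_ * _)); field.
rewrite /l2norm_on -/(S k) /M -[c]ger0_norm // -sqrtr_sqr -sqrtrM ?sqr_ge0 //.
rewrite ler_sqrt //; apply: le_trans hk.
rewrite c2 mul1r mulrC ler_wpM2l // lef_pV2 ?posrE; last first.
- by apply: mulr_gt0 => //; lra.
- by apply: mulr_gt0 => //; lra.
rewrite /K -natr1; lra.
Qed.
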